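(* Let $\mathcal{P}=\{1,\dots,p\}$ and let $M(1),\dots,M(p)\in\mathbb{R}^{n\times n}$ be exponentially stable (Hurwitz) matrices. Let $\tau_D>0$ and $\lambda>0$. Then there exists $g_0>0$ such that for every $g\ge g_0$ there is a constant $c>0$ such that, for every switching signal $\sigma\in\mathcal{S}(\tau_D)$ and every initial condition, the solution of $\dot x=gM(\sigma(t))x$ satisfies $\|x(t)\|\le c\,e^{-\lambda t}\|x(0)\|$ for all $t\ge0$.
   Context: A switching signal is a piecewise-constant, right-continuous map $\sigma:[0,\infty)\to\mathcal{P}$ with finitely many discontinuities on each bounded interval; $\mathcal{S}(\tau_D)$ is the set of switching signals whose consecutive discontinuity times $t_1<t_2<\cdots$ (with $t_0=0$) satisfy $t_{k+1}-t_k\ge\tau_D$ for all $k\ge0$. $\|\cdot\|$ is any vector norm (with induced matrix norm). *)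

(* Defs.v *)
From Stdlib Require Import Reals Lra List.
Open Scope R_scope.

(* Vectors of R^n are functions nat -> R (only indices < n matter);
   n x n matrices are functions nat -> nat -> R. *)
Definition vec := nat -> R.
Definition mat := nat -> nat -> R.

Fixpoint sumR (k : nat) (f : nat -> R) : R :=
  match k with O => 0 | S k' => sumR k' f + f k' end.

Definition mulmv (n : nat) (A : mat) (x : vec) : vec :=
  fun i => sumR n (fun j => A i j * x j).

Definition scalemx (g : R) (A : mat) : mat := fun i j => g * A i j.

Definition is_norm (n : nat) (N : vec -> R) : Prop :=
  (forall x y, (forall i, (i < n)%nat -> x i = y i) -> N x = N y) /\
  (forall x, 0 <= N x) /\
  (forall x, N x = 0 -> forall i, (i < n)%nat -> x i = 0) /\
  (forall a x, N (fun i => a * x i) = Rabs a * N x) /\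
  (forall x y, N (fun i => x i + y i) <= N x + N y).

Definition right_deriv (f : R -> R) (t v : R) : Prop :=
  forall eps, 0 < eps -> exists delta, 0 < delta /\
    forall h, 0 < h < delta -> Rabs ((f (t + h) - f t) / h - v) < eps.

(* x is a solution on [0,oo) of x'(t) = A(t) x(t), with A(t) piecewise
   constant: x is continuous on (0,oo) and at every t >= 0 its right
   derivative equals A(t) x(t) (Caratheodory solution). *)
Definition is_solution (n : nat) (A : R -> mat) (x : R -> vec) : Prop :=
  forall i, (i < n)%nat ->
    (forall t, 0 < t -> continuity_pt (fun s => x s i) t) /\
    (forall t, 0 <= t -> right_deriv (fun s => x s i) t (mulmv n (A t) (x t) i)).

(* max-norm (used only to define exponential stability, which is
   norm independent) *)
Definition maxnorm (n : nat) (x : vec) : R :=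
  fold_right Rmax 0 (map (fun j => Rabs (x j)) (seq 0 n)).

Definition exp_stable (n : nat) (M : mat) : Prop :=
  exists c alpha, 0 < c /\ 0 < alpha /\
    forall x, is_solution n (fun _ => M) x ->
      forall t, 0 <= t -> maxnorm n (x t) <= c * exp (- alpha * t) * maxnorm n (x 0).

Definition dwell_signal (tauD : R) (p : nat) (sigma : R -> nat) : Prop :=
  (forall s, 0 <= s -> (1 <= sigma s <= p)%nat) /\
  exists tk : nat -> R, tk O = 0 /\
    (forall k, tk (S k) - tk k >= tauD) /\
    (forall k s, tk k <= s < tk (S k) -> sigma s = sigma (tk k)).

(* Main.v *)
Require Import Defs.
From Stdlib Require Import Reals Lra Lia List ClassicalEpsilon Classical.
From Coquelicot Require Import Coquelicot.
Open Scope R_scope.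

Lemma sumR_ext m f g : (forall j, (j < m)%nat -> f j = g j) -> sumR m f = sumR m g.
Proof. induction m; simpl; intros H; auto. rewrite IHm by (intros; apply H; lia). rewrite H by lia; auto. Qed.

Lemma sumR_le m f g : (forall j, (j < m)%nat -> f j <= g j) -> sumR m f <= sumR m g.
Proof. induction m; simpl; intros H; [lra|]. assert (f m <= g m) by (apply H; lia). assert (sumR m f <= sumR m g) by (apply IHm; intros; apply H; lia). lra. Qed.

Lemma sumR_abs m f : Rabs (sumR m f) <= sumR m (fun j => Rabs (f j)).
Proof. induction m; simpl. rewrite Rabs_R0; lra. eapply Rle_trans. apply Rabs_triang. lra. Qed.

Lemma sumR_scal m c f : sumR m (fun j => c * f j) = c * sumR m f.
Proof. induction m; simpl. ring. rewrite IHm; ring. Qed.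

Lemma sumR_nonneg m f : (forall j, (j < m)%nat -> 0 <= f j) -> 0 <= sumR m f.
Proof. induction m; simpl; intros H; [lra|]. assert (0 <= f m) by (apply H; lia). assert (0 <= sumR m f) by (apply IHm; intros; apply H; lia). lra. Qed.

Lemma sumR_term m f j : (forall j, (j < m)%nat -> 0 <= f j) -> (j < m)%nat -> f j <= sumR m f.
Proof. induction m; simpl; intros H Hj; [lia|].
  destruct (Nat.eq_dec j m). subst. assert (0 <= sumR m f) by (apply sumR_nonneg; intros; apply H; lia). lra.
  assert (f j <= sumR m f) by (apply IHm; [intros; apply H; lia|lia]). assert (0 <= f m) by (apply H; lia). lra. Qed.

Fixpoint powmv n (A : mat) k (v : vec) : vec :=
  match k with O => v | S k => mulmv n A (powmv n A k v) end.

Definition coef n A v i k := powmv n A k v i / INR (Factorial.fact k).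
Definition Esol n A v (u : R) : vec := fun i => PSeries (coef n A v i) u.

Definition Ksum n (A : mat) := sumR n (fun i => sumR n (fun j => Rabs (A i j))).

Lemma Ksum_nonneg n A : 0 <= Ksum n A.
Proof. apply sumR_nonneg; intros; apply sumR_nonneg; intros; apply Rabs_pos. Qed.

Lemma pow_bound n A v r : 0 <= r -> (forall j, (j < n)%nat -> Rabs (v j) <= r) ->
  forall k i, (i < n)%nat -> Rabs (powmv n A k v i) <= r * Ksum n A ^ k.
Proof.
  intros Hr Hv k; induction k; intros i Hi; simpl. rewrite Rmult_1_r; auto.
  unfold mulmv. eapply Rle_trans. apply sumR_abs.
  eapply Rle_trans. apply sumR_le with (g := fun j => Rabs (A i j) * (r * Ksum n A ^ k)).
  intros j Hj. rewrite Rabs_mult. apply Rmult_le_compat_l. apply Rabs_pos. apply IHk; auto.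
  rewrite (sumR_ext _ _ (fun j => (r * Ksum n A ^ k) * Rabs (A i j))) by (intros; ring).
  rewrite sumR_scal.
  assert (0 <= r * Ksum n A ^ k) by (apply Rmult_le_pos; auto; apply pow_le, Ksum_nonneg).
  assert (sumR n (fun j => Rabs (A i j)) <= Ksum n A).
  { unfold Ksum. apply (sumR_term n (fun i => sumR n (fun j => Rabs (A i j)))); auto.
    intros; apply sumR_nonneg; intros; apply Rabs_pos. }
  replace (r * (Ksum n A * Ksum n A ^ k)) with ((r * Ksum n A ^ k) * Ksum n A) by ring.
  apply Rmult_le_compat_l; auto.
Qed.

Lemma exists_bound n (v : vec) : exists r, 0 <= r /\ forall j, (j < n)%nat -> Rabs (v j) <= r.
Proof. exists (sumR n (fun j => Rabs (v j))). split. apply sumR_nonneg; intros; apply Rabs_pos.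
  intros. apply (sumR_term n (fun j => Rabs (v j))); auto. intros; apply Rabs_pos. Qed.

Lemma coef_disk n A v i x : (i < n)%nat -> CV_disk (coef n A v i) x.
Proof.
  intros Hi. destruct (exists_bound n v) as [r [Hr Hv]].
  set (K := Ksum n A).
  apply (ex_series_le (V := R_CompleteNormedModule) _ (fun k => r * (/ INR (Factorial.fact k) * (K * Rabs x) ^ k))).
  - intros k. change (norm (Rabs (coef n A v i k * x ^ k))) with (Rabs (Rabs (coef n A v i k * x ^ k))).
    rewrite Rabs_Rabsolu. unfold coef. rewrite Rabs_mult, Rabs_div, <- RPow_abs.
    2: apply INR_fact_neq_0.
    rewrite (Rabs_right (INR (Factorial.fact k))) by (apply Rle_ge, pos_INR).
    rewrite Rpow_mult_distr.
    assert (Rabs (powmv n A k v i) <= r * K ^ k) by (apply pow_bound; auto).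
    assert (0 < / INR (Factorial.fact k)) by (apply Rinv_0_lt_compat, INR_fact_lt_0).
    assert (0 <= Rabs x ^ k) by (apply pow_le, Rabs_pos).
    unfold Rdiv. replace (r * (/ INR (Factorial.fact k) * (K ^ k * Rabs x ^ k))) with ((r * K^k) * / INR (Factorial.fact k) * Rabs x ^ k) by ring.
    apply Rmult_le_compat_r; auto. apply Rmult_le_compat_r; lra.
  - apply (ex_series_scal (K := R_AbsRing) (V := R_NormedModule) r (fun k => / INR (Factorial.fact k) * (K * Rabs x) ^ k)).
    exists (exp (K * Rabs x)). generalize (is_exp_Reals (K * Rabs x)).
    apply is_series_ext. intros k. unfold scal; simpl. unfold mult; simpl.
    rewrite pow_n_pow. ring.
Qed.

Lemma coef_radius n A v i x : (i < n)%nat -> Rbar_lt (Rabs x) (CV_radius (coef n A v i)).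
Proof.
  intros Hi. assert (H := proj1 (Lub_Rbar_correct (CV_disk (coef n A v i))) (Rabs x + 1) (coef_disk n A v i _ Hi)).
  unfold CV_radius. destruct (Lub_Rbar (CV_disk (coef n A v i))); simpl in *; auto. lra.
Qed.

Lemma PS_derive_coef n A v i k :
  PS_derive (coef n A v i) k = sumR n (fun j => A i j * coef n A v j k).
Proof.
  unfold PS_derive, coef. simpl powmv. unfold mulmv.
  rewrite (sumR_ext _ (fun j => A i j * (powmv n A k v j / INR (Factorial.fact k))) (fun j => / INR (Factorial.fact k) * (A i j * powmv n A k v j))) by (intros; unfold Rdiv; ring).
  rewrite sumR_scal. change (Factorial.fact (S k)) with (S k * Factorial.fact k)%nat.
  rewrite mult_INR. field. split. apply INR_fact_neq_0. apply not_0_INR; lia.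
Qed.

Lemma PSeries_sum n A v i u m : (m <= n)%nat ->
  ex_pseries (fun k => sumR m (fun j => A i j * coef n A v j k)) u /\
  PSeries (fun k => sumR m (fun j => A i j * coef n A v j k)) u = sumR m (fun j => A i j * PSeries (coef n A v j) u).
Proof.
  induction m; intros Hm.
  - simpl. split. apply (ex_pseries_ext (fun _ => 0)). reflexivity. apply CV_radius_inside. rewrite CV_radius_const_0. simpl; auto.
    apply PSeries_const_0.
  - destruct IHm as [He Hs]; [lia|].
    assert (Hm' : ex_pseries (coef n A v m) u) by (apply CV_disk_correct, coef_disk; lia).
    assert (Hm2 : ex_pseries (PS_scal (A i m) (coef n A v m)) u).
    { apply ex_pseries_scal; auto. apply Rmult_comm. }
    split.
    + eapply ex_pseries_ext. 2: apply (ex_pseries_plus _ _ _ He Hm2). intros k. reflexivity.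
    + simpl. rewrite <- Hs. rewrite <- (PSeries_scal (A i m) (coef n A v m) u).
      rewrite <- PSeries_plus; auto.
Qed.

Lemma Esol_deriv n A v i u : (i < n)%nat ->
  derivable_pt_lim (fun s => Esol n A v s i) u (mulmv n A (Esol n A v u) i).
Proof.
  intros Hi. apply is_derive_Reals.
  assert (H := is_derive_PSeries _ u (coef_radius n A v i u Hi)).
  unfold Esol. replace (mulmv n A (fun i0 => PSeries (coef n A v i0) u) i) with (PSeries (PS_derive (coef n A v i)) u); auto.
  rewrite (PSeries_ext _ (fun k => sumR n (fun j => A i j * coef n A v j k))) by apply PS_derive_coef.
  apply (PSeries_sum n A v i u n); lia.
Qed.

Lemma Esol_0 n A v i : Esol n A v 0 i = v i.
Proof. unfold Esol. rewrite PSeries_0. unfold coef. simpl. field. Qed.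

Definition ev (m : nat) : vec := fun i => if Nat.eq_dec i m then 1 else 0.
Definition trunc (m : nat) (v : vec) : vec := fun i => if Nat.ltb i m then v i else 0.
Definition Ssum n (N : vec -> R) := sumR n (fun j => N (ev j)).

Section NormFacts.
Variables (n : nat) (N : vec -> R) (HN : is_norm n N).

Lemma N_ext x y : (forall i, (i < n)%nat -> x i = y i) -> N x = N y.
Proof. apply HN. Qed.
Lemma N_pos x : 0 <= N x.
Proof. apply HN. Qed.
Lemma N_hom a x : N (fun i => a * x i) = Rabs a * N x.
Proof. apply HN. Qed.
Lemma N_tri x y : N (fun i => x i + y i) <= N x + N y.
Proof. apply HN. Qed.
Lemma N_def x : N x = 0 -> forall i, (i < n)%nat -> x i = 0.
Proof. apply HN. Qed.

Lemma Ssum_nonneg : 0 <= Ssum n N.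
Proof. apply sumR_nonneg; intros; apply N_pos. Qed.

Lemma N_trunc_le v m : N (trunc m v) <= sumR m (fun j => Rabs (v j) * N (ev j)).
Proof.
  induction m; simpl.
  - rewrite (N_ext _ (fun i => 0 * v i)). rewrite N_hom, Rabs_R0; lra.
    intros; unfold trunc; simpl; ring.
  - rewrite (N_ext _ (fun i => trunc m v i + (fun i => v m * ev m i) i)).
    + eapply Rle_trans. apply N_tri. rewrite N_hom. lra.
    + intros i _. unfold trunc, ev. destruct (Nat.ltb_spec i (S m)), (Nat.ltb_spec i m), (Nat.eq_dec i m); subst; try lia; ring.
Qed.

Lemma N_upper v r : (forall j, (j < n)%nat -> Rabs (v j) <= r) -> N v <= r * Ssum n N.
Proof.
  intros H. rewrite (N_ext _ (trunc n v)).
  eapply Rle_trans. apply N_trunc_le. unfold Ssum. rewrite <- sumR_scal.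
  apply sumR_le. intros j Hj. apply Rmult_le_compat_r. apply N_pos. auto.
  intros i Hi; unfold trunc. destruct (Nat.ltb_spec i n); lia || auto.
Qed.

Lemma lim_bound (u : nat -> R) L b c d : Un_cv u L -> 0 <= d ->
  (forall l, Rabs (u l - b) <= c + d / (INR l + 1)) -> Rabs (L - b) <= c.
Proof.
  intros Hu Hd Hb. destruct (Rle_dec (Rabs (L - b)) c) as [|Hlt]; auto. exfalso.
  set (eps := (Rabs (L - b) - c) / 2).
  assert (Heps : eps > 0) by (unfold eps; lra).
  destruct (Hu eps Heps) as [N1 HN1].
  destruct (archimed (d / eps)) as [Ha _].
  destruct (INR_unbounded (Rmax (d/eps) 0)) as [N2 HN2].
  set (l := (N1 + N2)%nat).
  assert (Hl : d / (INR l + 1) < eps).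
  { assert (INR N2 <= INR l) by (apply le_INR; unfold l; lia).
    assert (0 <= INR N2) by apply pos_INR.
    assert (d / eps < INR l + 1) by (generalize (Rmax_l (d/eps) 0); lra).
    apply Rmult_lt_reg_r with (INR l + 1). lra.
    unfold Rdiv. rewrite Rmult_assoc, Rinv_l by lra.
    apply Rmult_lt_reg_r with (/ eps). apply Rinv_0_lt_compat; lra.
    replace (eps * (INR l + 1) * / eps) with (INR l + 1) by (field; lra). lra. }
  assert (H1 := HN1 l ltac:(unfold l; lia)). unfold R_dist in H1.
  assert (H2 := Hb l).
  assert (Rabs (L - b) <= Rabs (u l - L) + Rabs (u l - b)).
  { replace (L - b) with (- (u l - L) + (u l - b)) by ring. eapply Rle_trans. apply Rabs_triang. rewrite Rabs_Ropp. lra. }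
  unfold eps in *. lra.
Qed.

Lemma small_zero a B : 0 <= a -> (forall k, a <= B / (INR k + 1)) -> a = 0.
Proof.
  intros Ha H. destruct (Req_dec a 0) as [|Hne]; auto. exfalso.
  assert (a > 0) by lra.
  destruct (INR_unbounded (Rmax (B / a) 0)) as [k Hk].
  assert (Hk2 := H k). generalize (Rmax_l (B/a) 0) (pos_INR k); intros.
  assert (B / a < INR k + 1) by lra.
  assert (B < a * (INR k + 1)).
  { apply Rmult_lt_reg_r with (/ a). apply Rinv_0_lt_compat; lra.
    replace (a * (INR k + 1) * / a) with (INR k + 1) by (field; lra). auto. }
  assert (a * (INR k + 1) <= B).
  { apply Rmult_le_reg_r with (/ (INR k + 1)). apply Rinv_0_lt_compat; lra.
    replace (a * (INR k + 1) * / (INR k + 1)) with a by (field; lra). auto. }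
  lra.
Qed.


Lemma inv_small D eps K a : 0 < D -> 0 < eps -> 2 * D / eps < INR K -> (K <= a)%nat -> D * / (INR a + 1) < eps / 2.
Proof.
  intros HD He HK Ha. assert (INR K <= INR a) by (apply le_INR; auto).
  assert (2 * D < eps * (INR K + 1)).
  { apply Rmult_lt_reg_r with (/ eps). apply Rinv_0_lt_compat; lra.
    replace (eps * (INR K + 1) * / eps) with (INR K + 1) by (field; lra). unfold Rdiv in HK. lra. }
  assert (0 <= INR K) by apply pos_INR.
  apply Rmult_lt_reg_r with (INR a + 1). lra.
  rewrite Rmult_assoc, Rinv_l by lra. nra.
Qed.

Lemma gap m D : (m < n)%nat -> D > 0 ->
  (forall v, (forall j, (m <= j)%nat -> v j = 0) -> forall j, (j < m)%nat -> Rabs (v j) <= D * N v) ->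
  exists c, c > 0 /\ forall w, (forall j, (m <= j)%nat -> w j = 0) -> c <= N (fun i => w i + ev m i).
Proof.
  intros Hm HD HP. apply NNPP; intros Hno.
  assert (Hk : forall k : nat, exists w, (forall j, (m <= j)%nat -> w j = 0) /\ N (fun i => w i + ev m i) < / (INR k + 1)).
  { intros k. apply NNPP; intros Hk. apply Hno. exists (/ (INR k + 1)). split. apply Rinv_0_lt_compat; generalize (pos_INR k); lra.
    intros w Hw. apply Rnot_lt_le. intros Hlt. apply Hk. exists w; auto. }
  set (w := fun k => proj1_sig (constructive_indefinite_description _ (Hk k))).
  assert (Hw : forall k, (forall j, (m <= j)%nat -> w k j = 0) /\ N (fun i => w k i + ev m i) < / (INR k + 1)).
  { intros k. unfold w. destruct (constructive_indefinite_description _ (Hk k)); simpl; auto. }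
  assert (Hinv : forall k, 0 < / (INR k + 1)) by (intros; apply Rinv_0_lt_compat; generalize (pos_INR k); lra).
  assert (Hpair : forall k l j, Rabs (w l j - w k j) <= D * / (INR k + 1) + D * / (INR l + 1)).
  { intros k l j. destruct (Compare_dec.le_lt_dec m j).
    - rewrite (proj1 (Hw l)), (proj1 (Hw k)) by auto. rewrite Rminus_0_r, Rabs_R0.
      generalize (Hinv k) (Hinv l); intros; nra.
    - apply Rle_trans with (D * N (fun i => w l i - w k i)).
      apply (HP (fun i => w l i - w k i)); auto. intros; rewrite (proj1 (Hw l)), (proj1 (Hw k)); auto; ring.
      rewrite <- Rmult_plus_distr_l; apply Rmult_le_compat_l; [lra|].
      rewrite (N_ext (fun i => w l i - w k i) (fun i => (fun i => w l i + ev m i) i + (fun i => -1 * (w k i + ev m i)) i)) by (intros; ring).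
      eapply Rle_trans. apply N_tri. rewrite N_hom. replace (Rabs (-1)) with 1 by (unfold Rabs; destruct (Rcase_abs (-1)); lra).
      destruct (Hw k), (Hw l). lra. }
  assert (Hc : forall j, Cauchy_crit (fun k => w k j)).
  { intros j eps Heps. destruct (INR_unbounded (2 * D / eps)) as [K HK]. exists K. intros a b Ha Hb. unfold R_dist.
    eapply Rle_lt_trans. apply Hpair.
    assert (D * / (INR a + 1) < eps / 2) by (eapply inv_small; eauto; lia).
    assert (D * / (INR b + 1) < eps / 2) by (eapply inv_small; eauto; lia). lra. }
  set (L := fun j => proj1_sig (Rcomplete.R_complete _ (Hc j))).
  assert (HL : forall j, Un_cv (fun k => w k j) (L j)) by (intros; unfold L; destruct (Rcomplete.R_complete _ (Hc j)); auto).
  assert (HLb : forall k j, Rabs (L j - w k j) <= D * / (INR k + 1)).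
  { intros k j. apply (lim_bound (fun l => w l j) (L j) (w k j) _ D (HL j)). lra. intros l. apply Hpair. }
  assert (HLm : L m = 0).
  { assert (Rabs (L m) = 0).
    { apply (small_zero _ D). apply Rabs_pos. intros k.
      generalize (HLb k m). rewrite (proj1 (Hw k) m) by lia. rewrite Rminus_0_r. unfold Rdiv. auto. }
    destruct (Req_dec (L m) 0); auto. exfalso. apply (Rabs_no_R0 (L m)); auto. }
  assert (HS := Ssum_nonneg).
  assert (Hz : N (fun i => L i + ev m i) = 0).
  { apply (small_zero _ (1 + D * Ssum n N)). apply N_pos. intros k.
    rewrite (N_ext _ (fun i => (fun i => w k i + ev m i) i + (fun i => L i - w k i) i)) by (intros; ring).
    eapply Rle_trans. apply N_tri.
    assert (N (fun i => L i - w k i) <= (D * / (INR k + 1)) * Ssum n N) by (apply N_upper; intros; apply HLb).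
    destruct (Hw k) as [_ H1]. unfold Rdiv.
    replace ((1 + D * Ssum n N) * / (INR k + 1)) with (/ (INR k + 1) + D * / (INR k + 1) * Ssum n N) by ring.
    lra. }
  assert (H := N_def _ Hz m Hm). simpl in H. rewrite HLm in H. unfold ev in H.
  destruct (Nat.eq_dec m m); [lra|congruence].
Qed.

Lemma lower_ind m : (m <= n)%nat -> exists D, D > 0 /\
  forall v, (forall j, (m <= j)%nat -> v j = 0) -> forall j, (j < m)%nat -> Rabs (v j) <= D * N v.
Proof.
  induction m; intros Hm.
  - exists 1. split. lra. intros; lia.
  - destruct IHm as [D [HD HP]]; [lia|].
    destruct (gap m D ltac:(lia) HD HP) as [c [Hc Hg]].
    assert (He := N_pos (ev m)).
    exists (D * (1 + N (ev m) / c) + / c). split.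
    { assert (0 < / c) by (apply Rinv_0_lt_compat; lra). assert (0 <= N (ev m) / c) by (unfold Rdiv; apply Rmult_le_pos; lra). nra. }
    intros v Hv.
    set (a := v m).
    assert (Ha : Rabs a * c <= N v).
    { destruct (Req_dec a 0) as [H0|H0]. rewrite H0, Rabs_R0. generalize (N_pos v); lra.
      rewrite (N_ext v (fun i => a * (fun i => trunc m (fun i => v i / a) i + ev m i) i)).
      rewrite N_hom. apply Rmult_le_compat_l. apply Rabs_pos.
      apply Hg. intros j Hj; unfold trunc. destruct (Nat.ltb_spec j m); lia || auto.
      intros i _. unfold trunc, ev, a. destruct (Nat.ltb_spec i m), (Nat.eq_dec i m); subst; try lia.
      field; auto. field. rewrite Hv by lia. ring. }
    assert (Ha2 : Rabs a <= N v / c).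
    { apply Rmult_le_reg_r with c; auto. unfold Rdiv. rewrite Rmult_assoc, Rinv_l by lra. lra. }
    assert (HNv := N_pos v).
    assert (0 < / c) by (apply Rinv_0_lt_compat; lra).
    intros j Hj. destruct (Nat.eq_dec j m).
    + subst j. fold a. unfold Rdiv in Ha2.
      assert (0 <= D * (1 + N (ev m) * / c) * N v). { apply Rmult_le_pos; auto. apply Rmult_le_pos. lra. assert (0 <= N (ev m) * / c) by (apply Rmult_le_pos; lra). lra. }
      nra.
    + set (u := fun i => v i - a * ev m i).
      assert (Hu : Rabs (v j) = Rabs (u j)) by (unfold u, ev; destruct (Nat.eq_dec j m); [lia|f_equal; ring]).
      rewrite Hu. eapply Rle_trans. apply HP. intros i Hi. unfold u, ev, a. destruct (Nat.eq_dec i m). subst; ring. rewrite Hv by lia; ring. lia.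
      assert (N u <= N v + Rabs a * N (ev m)).
      { unfold u. rewrite (N_ext _ (fun i => v i + (fun i => (- a) * ev m i) i)) by (intros; ring).
        eapply Rle_trans. apply N_tri. rewrite N_hom, Rabs_Ropp. lra. }
      assert (Rabs a * N (ev m) <= N v / c * N (ev m)) by (apply Rmult_le_compat_r; auto).
      unfold Rdiv in *.
      assert (D * N u <= D * (N v + N v * / c * N (ev m))) by (apply Rmult_le_compat_l; lra).
      assert (0 <= / c * N v) by (apply Rmult_le_pos; lra).
      nra.
Qed.

Lemma N_lower : exists D, D > 0 /\ forall v j, (j < n)%nat -> Rabs (v j) <= D * N v.
Proof.
  destruct (lower_ind n (le_n n)) as [D [HD HP]]. exists D. split; auto.
  intros v j Hj. rewrite (N_ext v (trunc n v)).
  replace (v j) with (trunc n v j). apply HP; auto. intros i Hi; unfold trunc. destruct (Nat.ltb_spec i n); lia || auto.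
  unfold trunc. destruct (Nat.ltb_spec j n); lia || auto.
  intros i Hi; unfold trunc. destruct (Nat.ltb_spec i n); lia || auto.
Qed.

End NormFacts.

Lemma maxnorm_gen (v : vec) l :
  (forall j, In j l -> Rabs (v j) <= fold_right Rmax 0 (map (fun j => Rabs (v j)) l)) /\
  0 <= fold_right Rmax 0 (map (fun j => Rabs (v j)) l) /\
  (forall r, 0 <= r -> (forall j, In j l -> Rabs (v j) <= r) -> fold_right Rmax 0 (map (fun j => Rabs (v j)) l) <= r).
Proof.
  induction l as [|a l IH]; simpl.
  - split; [tauto|]. split; [lra|]. intros; lra.
  - destruct IH as [H1 [H2 H3]]. split; [|split].
    + intros j [<-|Hj]. apply Rmax_l. eapply Rle_trans. apply H1; auto. apply Rmax_r.
    + eapply Rle_trans. apply H2. apply Rmax_r.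
    + intros r Hr Hj. apply Rmax_lub. apply Hj; auto. apply H3; auto.
Qed.

Lemma maxnorm_ge n v j : (j < n)%nat -> Rabs (v j) <= maxnorm n v.
Proof. intros; apply (maxnorm_gen v (seq 0 n)). apply in_seq; lia. Qed.
Lemma maxnorm_nonneg n v : 0 <= maxnorm n v.
Proof. apply (maxnorm_gen v (seq 0 n)). Qed.
Lemma maxnorm_le n v r : 0 <= r -> (forall j, (j < n)%nat -> Rabs (v j) <= r) -> maxnorm n v <= r.
Proof. intros Hr H; apply (maxnorm_gen v (seq 0 n)); auto. intros j Hj; apply in_seq in Hj; apply H; lia. Qed.
Lemma maxnorm_ext n v w : (forall j, (j < n)%nat -> v j = w j) -> maxnorm n v = maxnorm n w.
Proof.
  intros H. apply Rle_antisym; apply maxnorm_le; try apply maxnorm_nonneg; intros j Hj.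
  rewrite H by auto; apply maxnorm_ge; auto. rewrite <- H by auto; apply maxnorm_ge; auto.
Qed.

Lemma dpl_right f t l : derivable_pt_lim f t l -> right_deriv f t l.
Proof.
  intros H eps Heps. destruct (H eps Heps) as [d Hd]. exists d. split. apply cond_pos.
  intros h Hh. apply Hd. lra. rewrite Rabs_right; lra.
Qed.

Lemma Esol_cont n A v i u : (i < n)%nat -> continuity_pt (fun s => Esol n A v s i) u.
Proof. intros Hi. apply derivable_continuous_pt. exists (mulmv n A (Esol n A v u) i). apply Esol_deriv; auto. Qed.

Lemma glue_cont (f h : R -> R) x0 : continuity_pt f x0 -> continuity_pt h x0 -> f x0 = h x0 ->
  continuity_pt (fun u => if Rlt_dec u x0 then f u else h u) x0.
Proof.
  intros Hf Hh He eps Heps.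
  destruct (Hf eps Heps) as [a1 [Ha1 H1]]. destruct (Hh eps Heps) as [a2 [Ha2 H2]].
  exists (Rmin a1 a2). split. apply Rmin_pos; auto.
  intros y [Hy Hd]. simpl in *.
  destruct (Rlt_dec x0 x0) as [Hc|_]; [lra|].
  destruct (Rlt_dec y x0).
  - rewrite <- He. apply H1. split; auto. generalize (Rmin_l a1 a2); lra.
  - apply H2. split; auto. generalize (Rmin_r a1 a2); lra.
Qed.

Lemma mulmv_scale n g A x i : mulmv n (scalemx g A) x i = g * mulmv n A x i.
Proof. unfold mulmv, scalemx. rewrite <- sumR_scal. apply sumR_ext; intros; ring. Qed.

Lemma affine_cont a g u : continuity_pt (fun u => a + u / g) u.
Proof.
  apply derivable_continuous_pt. exists (/ g).
  intros eps Heps. exists (mkposreal eps Heps). intros h Hh _.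
  replace ((a + (u + h) / g - (a + u / g)) / h - / g) with (/ g * (h * / h) - / g) by (unfold Rdiv; ring).
  rewrite Rinv_r by auto. replace (/ g * 1 - / g) with 0 by ring. rewrite Rabs_R0; auto.
Qed.

Lemma shift_cont (F : R -> R) U u : continuity_pt F (u - U) -> continuity_pt (fun s => F (s - U)) u.
Proof.
  intros H. apply (continuity_pt_comp (fun s => s - U) F). 2: auto.
  apply derivable_continuous_pt. exists 1. intros eps Heps. exists (mkposreal eps Heps). intros h Hh _.
  replace ((u + h - U - (u - U)) / h - 1) with 0 by (field; auto). rewrite Rabs_R0; auto.
Qed.

Lemma piece n A (x : R -> vec) a b g C al :
  0 <= a -> a <= b -> 0 < g ->
  (forall y, is_solution n (fun _ => A) y -> forall t, 0 <= t -> maxnorm n (y t) <= C * exp (- al * t) * maxnorm n (y 0)) ->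
  (forall i, (i < n)%nat -> forall t, 0 < t -> continuity_pt (fun s => x s i) t) ->
  (forall i, (i < n)%nat -> forall t, a <= t < b -> right_deriv (fun s => x s i) t (g * mulmv n A (x t) i)) ->
  forall s, a <= s <= b -> maxnorm n (x s) <= C * exp (- al * g * (s - a)) * maxnorm n (x a).
Proof.
  intros Ha Hab Hg HB Hcont Hder s Hs.
  set (U := g * (s - a)).
  assert (HU : 0 <= U) by (unfold U; apply Rmult_le_pos; lra).
  set (y := fun u => if Rlt_dec u U then x (a + u / g) else Esol n A (x s) (u - U)).
  assert (HaU : a + U / g = s) by (unfold U; field; lra).
  assert (Hy : is_solution n (fun _ => A) y).
  { intros i Hi. split.
    - intros u Hu. destruct (Rtotal_order u U) as [Hlt|[Heq|Hgt]].
      + apply continuity_pt_locally_ext with (f := fun u => x (a + u / g) i) (a := U - u). lra.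
        intros z Hz. unfold y. destruct (Rlt_dec z U); auto. exfalso. unfold Rdist in Hz.
        apply Rabs_def2 in Hz. lra.
        apply (continuity_pt_comp (fun u => a + u / g) (fun t => x t i)). apply affine_cont.
        apply Hcont; auto. assert (0 < u / g) by (apply Rdiv_lt_0_compat; lra). lra.
      + subst u.
        apply continuity_pt_locally_ext with (a := 1) (f := fun u => if Rlt_dec u U then x (a + u / g) i else Esol n A (x s) (u - U) i). lra.
        intros z _. unfold y. destruct (Rlt_dec z U); auto.
        apply glue_cont.
        * apply (continuity_pt_comp (fun u => a + u / g) (fun t => x t i)). apply affine_cont.
          apply Hcont; auto. assert (0 < U / g) by (apply Rdiv_lt_0_compat; lra). lra.
        * apply (shift_cont (fun w => Esol n A (x s) w i)). apply Esol_cont; auto.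
        * rewrite HaU. unfold Rminus. rewrite Rplus_opp_r. rewrite Esol_0. auto.
      + apply continuity_pt_locally_ext with (f := fun u => Esol n A (x s) (u - U) i) (a := u - U). lra.
        intros z Hz. unfold y. destruct (Rlt_dec z U); auto. exfalso. unfold Rdist in Hz.
        apply Rabs_def2 in Hz. lra.
        apply (shift_cont (fun w => Esol n A (x s) w i)). apply Esol_cont; auto.
    - intros u Hu. destruct (Rlt_dec u U) as [Hlt|Hge].
      + set (t0 := a + u / g).
        assert (Ht0 : a <= t0 < b).
        { unfold t0. assert (0 <= u / g) by (unfold Rdiv; apply Rmult_le_pos; [lra|left; apply Rinv_0_lt_compat; lra]).
          assert (u / g < U / g) by (unfold Rdiv; apply Rmult_lt_compat_r; [apply Rinv_0_lt_compat|]; lra). lra. }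
        assert (Hd := Hder i Hi t0 Ht0).
        intros eps Heps. destruct (Hd (eps * g) ltac:(nra)) as [d [Hd0 Hdd]].
        exists (Rmin (g * d) (U - u)). split. apply Rmin_pos; nra.
        intros h Hh. unfold y. destruct (Rlt_dec (u + h) U) as [Hl|Hl].
        2: { exfalso. generalize (Rmin_r (g*d) (U - u)); lra. }
        destruct (Rlt_dec u U); [|contradiction]. fold t0.
        assert (Hhg : 0 < h / g < d).
        { split. apply Rdiv_lt_0_compat; lra. apply Rmult_lt_reg_r with g; auto.
          unfold Rdiv. rewrite Rmult_assoc, Rinv_l by lra. generalize (Rmin_l (g*d) (U - u)); lra. }
        assert (K := Hdd (h / g) Hhg).
        replace (a + (u + h) / g) with (t0 + h / g) by (unfold t0; field; lra).
        replace ((x (t0 + h / g) i - x t0 i) / h - mulmv n A (x t0) i)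
          with (((x (t0 + h / g) i - x t0 i) / (h / g) - g * mulmv n A (x t0) i) / g) by (field; lra).
        unfold Rdiv at 1. rewrite Rabs_mult, Rabs_inv, (Rabs_right g) by lra.
        apply Rmult_lt_reg_r with g; auto. rewrite Rmult_assoc, Rinv_l by lra. lra.
      + intros eps Heps. destruct (Esol_deriv n A (x s) i (u - U) Hi eps Heps) as [d Hd].
        exists d. split; [apply cond_pos|]. intros h Hh. unfold y.
        destruct (Rlt_dec (u + h) U); [lra|]. destruct (Rlt_dec u U); [contradiction|].
        replace (u + h - U) with (u - U + h) by ring. apply Hd; [lra| rewrite Rabs_right; lra]. }
  assert (K := HB y Hy U HU).
  assert (E1 : maxnorm n (y U) = maxnorm n (x s)).
  { apply maxnorm_ext. intros j Hj. unfold y. destruct (Rlt_dec U U); [lra|].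
    unfold Rminus. rewrite Rplus_opp_r. apply Esol_0. }
  assert (E2 : maxnorm n (y 0) = maxnorm n (x a)).
  { apply maxnorm_ext. intros j Hj. unfold y. destruct (Rlt_dec 0 U).
    replace (a + 0 / g) with a by (field; lra). auto.
    assert (U = 0) by lra. assert (s = a). { unfold U in H. nra. }
    rewrite H. unfold Rminus. rewrite Rplus_opp_r, Esol_0. rewrite H0; auto. }
  rewrite E1, E2 in K. replace (- al * g * (s - a)) with (- al * U) by (unfold U; ring). auto.
Qed.

Lemma exp_mono x y : x <= y -> exp x <= exp y.
Proof. intros [H|H]. left; apply exp_increasing; auto. subst; lra. Qed.

Lemma unif n p (M : nat -> mat) :
  (forall q, (1 <= q <= p)%nat -> exp_stable n (M q)) ->
  exists C al, 0 < C /\ 0 < al /\ forall q, (1 <= q <= p)%nat ->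
    forall y, is_solution n (fun _ => M q) y -> forall t, 0 <= t ->
      maxnorm n (y t) <= C * exp (- al * t) * maxnorm n (y 0).
Proof.
  intros H. induction p.
  - exists 1, 1. split; [lra|split; [lra|]]. intros; lia.
  - destruct IHp as [C1 [a1 [HC1 [Ha1 H1]]]]. intros; apply H; lia.
    destruct (H (S p) ltac:(lia)) as [c [a [Hc [Ha H2]]]].
    exists (Rmax C1 c), (Rmin a1 a). split. eapply Rlt_le_trans; [apply HC1|apply Rmax_l].
    split. apply Rmin_pos; auto.
    intros q Hq y Hy t Ht.
    assert (Hm := maxnorm_nonneg n (y 0)).
    assert (HE1 : exp (- a1 * t) <= exp (- Rmin a1 a * t)) by (apply exp_mono; generalize (Rmin_l a1 a); nra).
    assert (HE2 : exp (- a * t) <= exp (- Rmin a1 a * t)) by (apply exp_mono; generalize (Rmin_r a1 a); nra).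
    generalize (Rmax_l C1 c) (Rmax_r C1 c) (exp_pos (- a1 * t)) (exp_pos (- a * t)); intros.
    destruct (Nat.eq_dec q (S p)).
    + subst q. eapply Rle_trans. apply H2; auto. apply Rmult_le_compat_r; auto.
      apply Rmult_le_compat; lra.
    + eapply Rle_trans. apply (H1 q ltac:(lia) y Hy t Ht). apply Rmult_le_compat_r; auto.
      apply Rmult_le_compat; lra.
Qed.

Lemma find_interval (tk : nat -> R) t : tk O <= t ->
  forall K, t < tk K -> exists k, tk k <= t < tk (S k).
Proof.
  intros H0 K. induction K; intros HK. lra.
  destruct (Rlt_dec t (tk K)). apply IHK; auto. exists K; lra.
Qed.

Theorem lemma1 (n p : nat) (M : nat -> mat) (N : vec -> R) :
  is_norm n N ->
  (forall q, (1 <= q <= p)%nat -> exp_stable n (M q)) ->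
  forall tauD lam, 0 < tauD -> 0 < lam ->
  exists g0, 0 < g0 /\
    forall g, g0 <= g ->
    exists c, 0 < c /\
      forall sigma, dwell_signal tauD p sigma ->
      forall x : R -> vec,
        is_solution n (fun t => scalemx g (M (sigma t))) x ->
        forall t, 0 <= t -> N (x t) <= c * exp (- lam * t) * N (x 0).
Proof.
  intros HN HM tauD lam Htau Hlam.
  destruct (unif n p M HM) as [C [al [HC [Hal HB]]]].
  destruct (N_lower n N HN) as [D [HD HDl]].
  assert (HS := Ssum_nonneg n N HN).
  set (Lc := Rabs (ln C)).
  assert (HLc : 0 <= Lc) by apply Rabs_pos.
  assert (HLt : 0 <= Lc / tauD) by (unfold Rdiv; apply Rmult_le_pos; [lra|left; apply Rinv_0_lt_compat; lra]).
  assert (HLt2 : Lc / tauD * tauD = Lc) by (field; lra).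
  exists ((lam + Lc / tauD) / al + 1). split.
  { assert (0 <= (lam + Lc / tauD) / al) by (unfold Rdiv; apply Rmult_le_pos; [lra|left; apply Rinv_0_lt_compat; lra]). lra. }
  intros g Hg.
  assert (Hdiv : (lam + Lc / tauD) / al * al = lam + Lc / tauD) by (field; lra).
  assert (Hg0 : 0 < g) by (assert (0 <= (lam + Lc / tauD) / al) by (unfold Rdiv; apply Rmult_le_pos; [lra|left; apply Rinv_0_lt_compat; lra]); lra).
  assert (Hag : al * g >= lam + Lc / tauD + al) by nra.
  assert (Hkey : forall L, L >= tauD -> C * exp (- al * g * L) <= exp (- lam * L)).
  { intros L HL. rewrite <- (exp_ln C) at 1 by auto. rewrite <- exp_plus. apply exp_mono.
    assert (ln C <= Lc) by apply Rle_abs.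
    assert ((al * g - lam) * L >= (al * g - lam) * tauD) by nra.
    assert ((al * g - lam) * tauD >= Lc / tauD * tauD) by nra.
    nra. }
  exists (Ssum n N * C * D + 1). split. { assert (0 <= Ssum n N * C * D) by (apply Rmult_le_pos; [apply Rmult_le_pos|]; lra). lra. }
  intros sigma [Hsig [tk [Ht0 [Hstep Hconst]]]] x Hx t Ht.
  assert (Htk : forall k, tk k >= INR k * tauD).
  { induction k. rewrite Ht0; simpl; lra. rewrite S_INR. generalize (Hstep k); lra. }
  assert (Htk0 : forall k, 0 <= tk k) by (intros k; generalize (Htk k) (pos_INR k); nra).
  assert (Hint : forall k s, tk k <= s <= tk (S k) ->
            maxnorm n (x s) <= C * exp (- al * g * (s - tk k)) * maxnorm n (x (tk k))).
  { intros k s Hs. set (q := sigma (tk k)).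
    assert (Hq : (1 <= q <= p)%nat) by (apply Hsig; auto).
    apply (piece n (M q) x (tk k) (tk (S k)) g C al); auto.
    - generalize (Hstep k); lra.
    - apply HB; auto.
    - intros i Hi; apply (Hx i Hi).
    - intros i Hi t0 Ht0'. destruct (Hx i Hi) as [_ Hr].
      assert (Hr' := Hr t0 ltac:(generalize (Htk0 k); lra)). cbv beta in Hr'.
      rewrite mulmv_scale in Hr'. unfold q. rewrite <- (Hconst k t0 Ht0'). exact Hr'. }
  assert (Hm0 := maxnorm_nonneg n (x 0)).
  assert (Hfull : forall k, maxnorm n (x (tk k)) <= exp (- lam * tk k) * maxnorm n (x 0)).
  { induction k.
    - rewrite Ht0, Rmult_0_r, exp_0, Rmult_1_l; lra.
    - eapply Rle_trans. apply (Hint k (tk (S k))). generalize (Hstep k); lra.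
      assert (Hk := Hkey (tk (S k) - tk k) (Hstep k)).
      assert (0 <= C * exp (- al * g * (tk (S k) - tk k))) by (generalize (exp_pos (- al * g * (tk (S k) - tk k))); nra).
      eapply Rle_trans. apply Rmult_le_compat_l. auto. apply IHk.
      rewrite <- Rmult_assoc. apply Rmult_le_compat_r; auto.
      replace (- lam * tk (S k)) with (- lam * (tk (S k) - tk k) + - lam * tk k) by ring.
      rewrite exp_plus. apply Rmult_le_compat_r. left; apply exp_pos. auto. }
  destruct (INR_unbounded (t / tauD)) as [K HK].
  assert (HtK : t < tk K).
  { assert (t < INR K * tauD). { apply Rmult_lt_reg_r with (/ tauD). apply Rinv_0_lt_compat; lra.
      replace (INR K * tauD * / tauD) with (INR K) by (field; lra). unfold Rdiv in HK; lra. }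
    generalize (Htk K); lra. }
  destruct (find_interval tk t ltac:(rewrite Ht0; auto) K HtK) as [k Hk].
  assert (Hxt : maxnorm n (x t) <= C * exp (- lam * t) * maxnorm n (x 0)).
  { eapply Rle_trans. apply (Hint k t). lra.
    assert (exp (- al * g * (t - tk k)) <= exp (- lam * (t - tk k))) by (apply exp_mono; nra).
    assert (Hmk := maxnorm_nonneg n (x (tk k))).
    apply Rle_trans with (C * exp (- lam * (t - tk k)) * (exp (- lam * tk k) * maxnorm n (x 0))).
    - apply Rmult_le_compat. generalize (exp_pos (- al * g * (t - tk k))); nra. auto.
      apply Rmult_le_compat_l; lra. apply Hfull.
    - replace (- lam * t) with (- lam * (t - tk k) + - lam * tk k) by ring. rewrite exp_plus. lra. }
  assert (HN1 : N (x t) <= maxnorm n (x t) * Ssum n N).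
  { apply N_upper; auto. intros; apply maxnorm_ge; auto. }
  assert (HN0 : maxnorm n (x 0) <= D * N (x 0)).
  { apply maxnorm_le. apply Rmult_le_pos. lra. apply (N_pos n N HN). intros; apply HDl; auto. }
  assert (HNx0 := N_pos n N HN (x 0)).
  assert (He := exp_pos (- lam * t)).
  set (E := exp (- lam * t)) in *.
  assert (maxnorm n (x t) * Ssum n N <= C * E * (D * N (x 0)) * Ssum n N).
  { apply Rmult_le_compat_r; auto. eapply Rle_trans. apply Hxt. apply Rmult_le_compat_l; auto. nra. }
  assert (0 <= C * E * N (x 0)) by (apply Rmult_le_pos; [nra|auto]).
  assert (C * E * (D * N (x 0)) * Ssum n N = (Ssum n N * C * D) * (E * N (x 0))) by ring.
  assert (0 <= E * N (x 0)) by nra.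
  nra.
Qed.
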